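(* Assume the distribution $\mathcal D_2(\lambda)$ defined in the context and consider its marginal on $\mathbf X_1\setminus\{X_a\}$, with structures ranging over DAGs on $\mathbf X_1\setminus\{X_a\}$ with in-degree at most $k$. There is a unique optimal Markov equivalence class for this marginal, and the difference in scores between the optimal equivalence class and the second-best equivalence class is at least $\beta$.
   Context: Entropies use the natural logarithm; $k$ is a fixed positive integer. For a set of variables, a family is $\langle Y,\Pi\rangle$ with $\Pi$ not containing $Y$ and $|\Pi|\le k$, with $H(\langle Y,\Pi\rangle)=H(Y\mid\Pi)$; DAGs are identified with their sets of families and have score $\mathcal S(G)=-\sum_{f\in G}H(f)$. Markov-equivalent DAGs (same conditional independence constraints) form equivalence classes (ECs) with a common score. Construction. $\mathcal D_1$ is a distribution over a finite set $\mathbf X_1$ of at least $k$ discrete variables, containing a variable $X_a$, such that for some $\alpha,\beta>0$: (I) among DAGs over $\mathbf X_1$ with in-degree $\le k$ there is a unique optimal EC, with score gap at least $\beta$ to the next-best EC; (II) $X_a$ has no children in any structure of the optimal EC; (III) $H(X_a\mid\mathbf X_1\setminus\{X_a\})=\alpha$. Let $\mathbf X=\mathbf X_1\cup\{X_b\}$, $d=|\mathbf X|$. For $\lambda\in(0,\min(\alpha,\beta/(3d)))$, $\mathcal D_2(\lambda)$ is a distribution on $\mathbf X$ with marginal $\mathcal D_1$ on $\mathbf X_1$ such that: (IV) there is a hidden Bernoulli variable $C$ independent of $\mathbf X_1$ with $P[X_b=X_a\mid C=1]=1$ and $X_b$ independent of $\mathbf X_1$ given $C=0$; (V) $\max(H(X_b\mid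 X_a),H(X_a\mid X_b))=\lambda$. *)

(* Defs.v *)
From mathcomp Require Import all_boot all_order all_algebra.
From mathcomp Require Import reals exp.
Set Implicit Arguments. Unset Strict Implicit. Unset Printing Implicit Defensive.
Import Order.TTheory GRing.Theory Num.Theory.
Local Open Scope ring_scope.

Section Defs.
Variables (R : realType) (V A : finType).
(* V : the (finite) index set of all variables X; A : common finite alphabet.
   An assignment is x : {ffun V -> A}; a distribution is a pmf on assignments. *)
Notation asg := {ffun V -> A}.

Definition is_pmf (P : asg -> R) : Prop :=
  (forall x, 0 <= P x) /\ \sum_x P x = 1.

Definition marg (P : asg -> R) (S : {set V}) (x : asg) : R :=
  \sum_(y : asg | [forall v in S, y v == x v]) P y.

(* conditional entropy H(Y | Pi) (natural log), terms with P x = 0 vanish *)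
Definition condH (P : asg -> R) (Y : V) (Pi : {set V}) : R :=
  - \sum_x P x * ln (marg P (Y |: Pi) x / marg P Pi x).

(* A structure (DAG) is given by its parent-set function G; u -> v iff u \in G v *)
Definition edge (G : V -> {set V}) : rel V := fun u v => u \in G v.
Definition adj (G : V -> {set V}) : rel V := fun u v => (u \in G v) || (v \in G u).

Definition acyclic (G : V -> {set V}) : Prop :=
  forall u v, u \in G v -> ~~ connect (edge G) v u.

Definition dag (S : {set V}) (k : nat) (G : V -> {set V}) : Prop :=
  [/\ forall v, v \notin S -> G v = set0,
      forall v, G v \subset S :\ v,
      forall v, (#|G v| <= k)%N
    & acyclic G].

Definition score (P : asg -> R) (S : {set V}) (G : V -> {set V}) : R :=
  - \sum_(v in S) condH P v (G v).

(* active (simple) trail s given Z: consecutive nodes adjacent, no repeated node,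
   every collider has a descendant (or itself) in Z, every non-collider is not in Z *)
Definition active_trail (G : V -> {set V}) (Z : {set V}) (s : seq V) : bool :=
  match s with
  | [::] => false
  | x0 :: s' =>
    [&& path (adj G) x0 s', uniq s' && (x0 \notin s') &
     all (fun i => let u := nth x0 s i in let w := nth x0 s i.+1 in
                   let v := nth x0 s i.+2 in
                   if (u \in G w) && (v \in G w)
                   then [exists z in Z, connect (edge G) w z]
                   else w \notin Z)
         (iota 0 (size s).-2)]
  end.

Definition dsep (G : V -> {set V}) (Ab B Z : {set V}) : Prop :=
  forall a b s, a \in Ab -> b \in B -> active_trail G Z (a :: s) -> last a s != b.

Definition markov_eq (S : {set V}) (G1 G2 : V -> {set V}) : Prop :=
  forall Ab B Z : {set V}, Ab \subset S -> B \subset S -> Z \subset S ->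
    [disjoint Ab & B] -> [disjoint Ab & Z] -> [disjoint B & Z] ->
    (dsep G1 Ab B Z <-> dsep G2 Ab B Z).

(* Gstar is in a unique optimal EC among DAGs over S with in-degree <= k
   (scores of the marginal of P on S), with gap at least beta to any other EC *)
Definition opt_EC_gap (P : asg -> R) (S : {set V}) (k : nat) (beta : R)
    (Gstar : V -> {set V}) : Prop :=
  [/\ dag S k Gstar,
      forall G, dag S k G -> score P S G <= score P S Gstar,
      forall G, dag S k G -> score P S G = score P S Gstar -> markov_eq S G Gstar
    & forall G, dag S k G -> ~ markov_eq S G Gstar ->
        score P S G <= score P S Gstar - beta].

Definition unique_opt_EC_gap (P : asg -> R) (S : {set V}) (k : nat) (beta : R) : Prop :=
  exists Gstar, opt_EC_gap P S k beta Gstar.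

End Defs.

(* Main.v *)
Require Import Defs.
From mathcomp Require Import all_boot all_order all_algebra.
Set Warnings "-notation-overridden,-ambiguous-paths".
From mathcomp Require Import reals exp lra.
Import Order.TTheory GRing.Theory Num.Theory.

Lemma conn_sink (T : finType) (e : rel T) a z :
  (forall y, ~~ e a y) -> connect e a z -> z = a.
Proof.
move=> He /connectP [[|y p] /= Hp ->] //.
by move: Hp; rewrite (negbTE (He y)).
Qed.

Lemma conn_transfer (T : finType) (e1 e2 : rel T) a :
  (forall u y, y != a -> e1 u y = e2 u y) -> (forall y, ~~ e1 a y) ->
  forall w z, z != a -> connect e1 w z -> connect e2 w z.
Proof.
move=> Heq Hs w z za /connectP [p Hp Hz]; apply/connectP; exists p => //.
elim: p w Hp Hz => [|y p IH] w //= /andP [Hwy Hp] Hz.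
have ya : y != a.
  apply/eqP => ya; subst y.
  case: p Hp Hz {IH} => [|y' p'] /=; first by move=> _ Hz; rewrite Hz eqxx in za.
  by rewrite (negbTE (Hs y')).
by rewrite -Heq // Hwy /= IH.
Qed.

Section Trail.
Variables (V : finType) (a : V) (G H : V -> {set V}).
Hypotheses (nG : forall v, a \notin G v) (nH : forall v, a \notin H v)
  (eGH : forall v, v != a -> G v = H v).

Lemma trail_avoid (Z : {set V}) x s : a \notin Z -> x != a -> last x s != a ->
  active_trail G Z (x :: s) -> a \notin x :: s.
Proof.
move=> aZ xa la /and3P [Hp Hu Hall].
apply/negP => ain.
have ains : a \in s by move: ain; rewrite inE eq_sym (negbTE xa).
set j := index a s.
have js : (j < size s)%N by rewrite index_mem.
have nj : nth x s j = a by rewrite nth_index.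
have j1 : (j.+1 < size s)%N.
  rewrite ltn_neqAle js andbT; apply/negP => /eqP Hj.
  move: la; rewrite -nth_last -Hj /= nj eqxx.
  by [].
move/allP: Hall => /(_ j).
rewrite mem_iota /= add0n.
have -> : (j < (size s).-1)%N by rewrite -ltnS prednK // (leq_ltn_trans _ js).
move=> /(_ isT) /=.
move/(pathP x): Hp => Hp.
have h1 := Hp j js; have h2 := Hp j.+1 j1.
rewrite /= nj in h1 h2.
rewrite /adj (negbTE (nG _)) orbF in h1.
rewrite /adj (negbTE (nG _)) /= in h2.
rewrite nj h1 h2 /=.
case/existsP => z /andP [zZ /(conn_sink _)].
move=> Hc; have := Hc _; rewrite /edge.
move=> Hc'.
have zz : z = a by apply: Hc' => y; exact: nG.
by move: aZ; rewrite -zz zZ.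
Qed.

Lemma trail_transfer (Z : {set V}) x s : a \notin Z -> x != a -> last x s != a ->
  active_trail G Z (x :: s) -> active_trail H Z (x :: s).
Proof.
move=> aZ xa la Ht.
have nin := @trail_avoid Z x s aZ xa la Ht.
have allna : all (fun y => y != a) (x :: s).
  by apply/allP => y yin; apply: contraNneq nin => <-.
have eadj : {in (fun y => y != a) &, adj G =2 adj H}.
  by move=> u v ua va; rewrite /adj (eGH _ ua) (eGH _ va).
move: Ht => /and3P [Hp Hu Hall].
apply/and3P; split => //.
  by rewrite -(eq_in_path eadj allna).
apply/allP => i iin; move/allP: Hall => /(_ i iin).
have Hi : (i.+2 < size (x :: s))%N.
  move: iin; rewrite mem_iota add0n /=.
  case: (size s) => [|n] //=; by rewrite -addn2 addnC -ltn_subRL subn2 /= => ->. 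
have nth_na : forall j, (j < size (x :: s))%N -> nth x (x :: s) j != a.
  by move=> j jl; move/allP: allna; apply; rewrite mem_nth.
have n0 := nth_na i (ltn_trans (ltnSn _) (ltn_trans (ltnSn _) Hi)).
have n1 := nth_na i.+1 (ltn_trans (ltnSn _) Hi).
have n2 := nth_na i.+2 Hi.
rewrite /= in n1 n2 *; rewrite (eGH _ n1).
case: ifP => // _ /existsP [z /andP [zZ Hc]].
apply/existsP; exists z; rewrite zZ /=.
apply: (@conn_transfer _ (edge G) (edge H) a _ _ _ _ _ Hc).
- by move=> u y ya; rewrite /edge (eGH _ ya).
- by move=> y; rewrite /edge nG.
- by apply: contraNneq aZ => <-.
Qed.

End Trail.

Lemma dsep_transfer {V : finType} {a : V} {G H : V -> {set V}} {Ab B Z : {set V}} :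
  (forall v, a \notin G v) -> (forall v, a \notin H v) ->
  (forall v, v != a -> G v = H v) ->
  a \notin Ab -> a \notin B -> a \notin Z ->
  dsep H Ab B Z -> dsep G Ab B Z.
Proof.
move=> nG nH eGH aA aB aZ HH x b s xA bB Ht.
apply/negP => /eqP lb.
have xa : x != a by apply: contraNneq aA => <-.
have la : last x s != a by rewrite lb; apply: contraNneq aB => <-.
have := HH x b s xA bB (@trail_transfer V a G H nG eGH Z x s aZ xa la Ht).
by rewrite lb eqxx.
Qed.

Lemma markov_transfer (V : finType) (a : V) (S1 S : {set V}) (G1 G2 H1 H2 : V -> {set V}) :
  S \subset S1 -> a \notin S ->
  (forall v, a \notin G1 v) -> (forall v, a \notin H1 v) -> (forall v, v != a -> G1 v = H1 v) ->
  (forall v, a \notin G2 v) -> (forall v, a \notin H2 v) -> (forall v, v != a -> G2 v = H2 v) ->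
  markov_eq S1 G1 G2 -> markov_eq S H1 H2.
Proof.
move=> sS aS n1 m1 e1 n2 m2 e2 Hm Ab B Z sA sB sZ d1 d2 d3.
have nA : a \notin Ab by apply: contra aS; apply: (subsetP sA).
have nB : a \notin B by apply: contra aS; apply: (subsetP sB).
have nZ : a \notin Z by apply: contra aS; apply: (subsetP sZ).
have e1' : forall v, v != a -> H1 v = G1 v by move=> v va; rewrite e1.
have e2' : forall v, v != a -> H2 v = G2 v by move=> v va; rewrite e2.
have := Hm Ab B Z (subset_trans sA sS) (subset_trans sB sS) (subset_trans sZ sS) d1 d2 d3.
case=> h1 h2; split => h.
- apply: (dsep_transfer m2 n2 e2' nA nB nZ); apply: h1.
  exact: (dsep_transfer n1 m1 e1 nA nB nZ).
- apply: (dsep_transfer m1 n1 e1' nA nB nZ); apply: h2.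
  exact: (dsep_transfer n2 m2 e2 nA nB nZ).
Qed.
Local Open Scope ring_scope.

Lemma score_split {R : realType} {V A : finType} (P : {ffun V -> A} -> R)
   {S1 : {set V}} {a : V} {H H' : V -> {set V}} :
  a \in S1 -> (forall v, v != a -> H v = H' v) ->
  score P S1 H = score P (S1 :\ a) H' - condH P a (H a).
Proof.
move=> aS eH; rewrite /score (bigD1 a) //=.
rewrite (eq_big (fun v => v \in S1 :\ a) (fun v => condH P v (H' v))).
- by rewrite opprD addrC.
- by move=> v; rewrite !inE andbC.
- by move=> v /andP [_ va]; rewrite eH.
Qed.

Lemma markov_refl (V : finType) (S : {set V}) G : markov_eq S G G.
Proof. by move=> *; split. Qed.

Theorem lemma10 (R : realType) (V A : finType) (k : nat) (Xa Xb : V)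
    (P : {ffun V -> A} -> R) (alpha beta lambda : R) :
  (0 < k)%N ->
  is_pmf P ->
  Xa != Xb ->
  (k <= #|[set~ Xb]|)%N ->
  0 < alpha -> 0 < beta ->
  (exists Gstar, opt_EC_gap P [set~ Xb] k beta Gstar /\
     forall G, dag [set~ Xb] k G -> markov_eq [set~ Xb] G Gstar ->
       forall Y, Xa \notin G Y) ->
  condH P Xa ([set~ Xb] :\ Xa) = alpha ->
  0 < lambda -> lambda < alpha -> lambda < beta / (3 * #|V|%:R) ->
  (exists Q : {ffun V -> A} -> bool -> R,
     [/\ forall x c, 0 <= Q x c,
         forall x, Q x false + Q x true = P x,
         forall u c,
           \sum_(x : {ffun V -> A} | [forall v in [set~ Xb], x v == u v]) Q x c =
           (\sum_(x : {ffun V -> A} | [forall v in [set~ Xb], x v == u v]) (Q x false + Q x true)) *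
           (\sum_x Q x c),
         \sum_(x : {ffun V -> A} | x Xb != x Xa) Q x true = 0
       & forall u b,
           (\sum_(x : {ffun V -> A} | [forall v in [set~ Xb], x v == u v] && (x Xb == b)) Q x false) *
           (\sum_x Q x false) =
           (\sum_(x : {ffun V -> A} | x Xb == b) Q x false) *
           (\sum_(x : {ffun V -> A} | [forall v in [set~ Xb], x v == u v]) Q x false)]) ->
  Num.max (condH P Xb [set Xa]) (condH P Xa [set Xb]) = lambda ->
  unique_opt_EC_gap P ([set~ Xb] :\ Xa) k beta.
Proof.
move=> _ _ aneb _ _ _ [Gs [[dGs optGs eqGs gapGs] II]] _ _ _ _ _ _.
set S1 := [set~ Xb]; set S := S1 :\ Xa.
have nGs : forall v, Xa \notin Gs v := II Gs dGs (markov_refl _ _ _).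
have aS1 : Xa \in S1 by rewrite !inE.
have aS : Xa \notin S by rewrite !inE eqxx.
have sS : S \subset S1 by apply/subsetP => v; rewrite !inE => /andP [].
case: (dGs) => dGs1 dGs2 dGs3 dGs4.
pose G0 := fun v => if v == Xa then set0 else Gs v.
have eG0 : forall v, v != Xa -> Gs v = G0 v by move=> v /negbTE va; rewrite /G0 va.
have nG0 : forall v, Xa \notin G0 v.
  by move=> v; rewrite /G0; case: ifP => _; rewrite ?inE.
have scG0 : score P S1 Gs = score P S G0 - condH P Xa (Gs Xa) := score_split P aS1 eG0.
exists G0.
have dG0 : dag S k G0.
  split.
  - move=> v vS; rewrite /G0; case: ifP => // /negbT va; apply: dGs1.
    by move: vS; rewrite !inE va.
  - move=> v; rewrite /G0; case: ifP => [_|/negbT va]; first exact: sub0set.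
    apply/subsetP => u uin; have := subsetP (dGs2 v) u uin.
    have ua : u != Xa by apply: contraNneq (nGs v) => <-.
    by rewrite !inE ua.
  - by move=> v; rewrite /G0; case: ifP => _; rewrite ?cards0.
  - move=> u v; rewrite /G0; case: ifP => [_|/negbT va]; first by rewrite inE.
    move=> uin; have ua : u != Xa by apply: contraNneq (nGs v) => <-.
    apply/negP => Hc; move/negP: (dGs4 u v uin); apply.
    apply: (@conn_transfer _ (edge G0) (edge Gs) Xa _ _ _ _ ua Hc).
    + by move=> x y ya; rewrite /edge eG0.
    + by move=> y; rewrite /edge.
have key : forall G, dag S k G ->
    [/\ dag S1 k (fun v => if v == Xa then Gs Xa else G v),
        score P S G = score P S1 (fun v => if v == Xa then Gs Xa else G v) + condH P Xa (Gs Xa)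
      & markov_eq S1 (fun v => if v == Xa then Gs Xa else G v) Gs -> markov_eq S G G0].
  move=> G [d1 d2 d3 d4].
  set Ge := fun v => if v == Xa then Gs Xa else G v.
  have nG : forall v, Xa \notin G v.
    by move=> v; apply/negP => /(subsetP (d2 v)); rewrite !inE eqxx andbF.
  have nGe : forall v, Xa \notin Ge v.
    by move=> v; rewrite /Ge; case: ifP => _; [exact: nGs | exact: nG].
  have eGe : forall v, v != Xa -> Ge v = G v by move=> v /negbTE va; rewrite /Ge va.
  split.
  - split.
    + move=> v vS1; have va : v != Xa by apply: contraNneq vS1 => ->.
      rewrite eGe //; apply: d1; by move: vS1; rewrite !inE va.
    + move=> v; rewrite /Ge; case: ifP => [/eqP -> //|_].
      apply: (subset_trans (d2 v)); apply: setSD; exact: sS.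
    + by move=> v; rewrite /Ge; case: ifP.
    + move=> u v; rewrite /Ge; case: ifP => [/eqP -> uin|/negbT va uin].
      * apply/negP => Hc.
        have ua : u = Xa.
          by apply: (@conn_sink _ (edge Ge) Xa u) Hc => y; rewrite /edge nGe.
        by move: uin; rewrite ua (negbTE (nGs Xa)).
      * have ua : u != Xa by apply: contraNneq (nG v) => <-.
        apply/negP => Hc; move/negP: (d4 u v uin); apply.
        apply: (@conn_transfer _ (edge Ge) (edge G) Xa _ _ _ _ ua Hc).
        -- by move=> x y ya; rewrite /edge eGe.
        -- by move=> y; rewrite /edge (negbTE (nGe y)).
  - by rewrite (score_split P aS1 eGe) /Ge eqxx subrK.
  - move=> Hm.
    exact: (@markov_transfer _ _ _ _ _ _ _ _ sS aS nGe nG eGe nGs nG0 eG0 Hm).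
split => //.
- move=> G dG; case: (key G dG) => dGe -> _.
  have := optGs _ dGe; rewrite scG0 => h; lra.
- move=> G dG Heq; case: (key G dG) => dGe Hs Hm; apply: Hm; apply: eqGs => //.
  rewrite scG0; move: Heq; rewrite Hs => h; lra.
- move=> G dG Hn; case: (key G dG) => dGe Hs Hm.
  have Hn' : ~ markov_eq S1 (fun v => if v == Xa then Gs Xa else G v) Gs by move/Hm.
  have := gapGs _ dGe Hn'.
  rewrite Hs scG0 => Hle; lra.
Qed.
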